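(* Let $F(z)=\sum_{k=0}^\infty b_k z^k\in\mathcal{B}$ with $b_1=a\in(0,1)$, and let $0<r\le 1/\sqrt3$. Then \[ \sum_{k=2}^\infty k|b_k|^2r^{2k}\le \frac{3(9-4a^2)^2}{64a^4}\left(-\log\Big(1-\frac{4a^2r^2}{3}\Big)-\frac{4a^2r^2}{3}\right). \]
   Context: $\mathbb{D}$ denotes the open unit disc. $\mathcal{B}$ is the class of functions $F$ analytic in $\mathbb{D}$ satisfying $|F'(z)|\le \frac{1}{1-|z|^2}$ for all $z\in\mathbb{D}$. For $F\in\mathcal{B}$ we write its Taylor expansion as $F(z)=\sum_{k=0}^\infty b_k z^k$. *)

(* Defs.v *)
From Stdlib Require Import Reals.
Open Scope R_scope.

Definition Cx : Type := (R * R)%type.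
Definition Cmul (z w : Cx) : Cx :=
  (fst z * fst w - snd z * snd w, fst z * snd w + snd z * fst w).
Fixpoint Cpow (z : Cx) (n : nat) : Cx :=
  match n with O => (1, 0) | S m => Cmul z (Cpow z m) end.
Definition Cnorm (z : Cx) : R := sqrt (fst z ^ 2 + snd z ^ 2).
Definition RtoC (x : R) : Cx := (x, 0).

Definition Cseries_cv (s : nat -> Cx) (l : Cx) : Prop :=
  Un_cv (fun N => sum_f_R0 (fun k => fst (s k)) N) (fst l) /\
  Un_cv (fun N => sum_f_R0 (fun k => snd (s k)) N) (snd l).

(* F(z) = sum_k b k z^k is analytic in the unit disc (the Taylor series
   converges on D), and its derivative F'(z) = sum_k (k+1) b_(k+1) z^k
   satisfies |F'(z)| <= 1/(1-|z|^2) on D. *)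
Definition in_class_B (b : nat -> Cx) : Prop :=
  (forall z : Cx, Cnorm z < 1 ->
     exists l : Cx, Cseries_cv (fun k => Cmul (b k) (Cpow z k)) l) /\
  (forall z : Cx, Cnorm z < 1 ->
     exists l : Cx,
       Cseries_cv (fun k => Cmul (RtoC (INR (S k))) (Cmul (b (S k)) (Cpow z k))) l
       /\ Cnorm l <= 1 / (1 - Cnorm z ^ 2)).

(* Main.v *)
Require Import Defs.
From Stdlib Require Import Reals Lra Lia Psatz Arith ZArith.
From Coquelicot Require Import Coquelicot.
Open Scope R_scope.

Fixpoint csum (f : nat -> C) (n : nat) : C :=
  match n with O => RtoC 0 | S k => (csum f k + f k)%C end.
Fixpoint rsum (f : nat -> R) (n : nat) : R :=
  match n with O => 0 | S k => rsum f k + f k end.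

Lemma csum_ext f g n : (forall k, (k < n)%nat -> f k = g k) -> csum f n = csum g n.
Proof. induction n; intros H; simpl; auto. rewrite IHn, H; auto. Qed.
Lemma rsum_ext f g n : (forall k, (k < n)%nat -> f k = g k) -> rsum f n = rsum g n.
Proof. induction n; intros H; simpl; auto. rewrite IHn, H; auto. Qed.
Lemma csum_plus f g n : csum (fun k => f k + g k)%C n = (csum f n + csum g n)%C.
Proof. induction n; simpl. apply injective_projections; simpl; ring. rewrite IHn. 
  apply injective_projections; simpl; ring. Qed.
Lemma csum_scal c f n : (c * csum f n)%C = csum (fun k => c * f k)%C n.
Proof. induction n; simpl. apply injective_projections; simpl; ring. rewrite <- IHn.
  apply injective_projections; simpl; ring. Qed.
Lemma csum_zero n : csum (fun _ => RtoC 0) n = RtoC 0.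
Proof. induction n; simpl; auto. rewrite IHn. apply injective_projections; simpl; ring. Qed.
Lemma csum_swap (f : nat -> nat -> C) n m :
  csum (fun i => csum (fun j => f i j) m) n = csum (fun j => csum (fun i => f i j) n) m.
Proof. induction n; simpl. rewrite csum_zero; auto.
  rewrite IHn, <- csum_plus. auto. Qed.
Lemma csum_conj f n : Cconj (csum f n) = csum (fun k => Cconj (f k)) n.
Proof. induction n; simpl. apply injective_projections; simpl; ring. rewrite Cplus_conj, IHn; auto. Qed.
Lemma csum_fst f n : fst (csum f n) = rsum (fun k => fst (f k)) n.
Proof. induction n; simpl; auto. rewrite IHn; auto. Qed.
Lemma csum_snd f n : snd (csum f n) = rsum (fun k => snd (f k)) n.
Proof. induction n; simpl; auto. rewrite IHn; auto. Qed.
Lemma csum_Cmod f n : Cmod (csum f n) <= rsum (fun k => Cmod (f k)) n.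
Proof. induction n; simpl. rewrite Cmod_0; lra.
  eapply Rle_trans. apply Cmod_triangle. lra. Qed.
Lemma rsum_le f g n : (forall k, (k < n)%nat -> f k <= g k) -> rsum f n <= rsum g n.
Proof. induction n; intros H; simpl. lra. assert (f n <= g n) by auto. 
  assert (rsum f n <= rsum g n) by auto. lra. Qed.
Lemma rsum_nonneg f n : (forall k, (k < n)%nat -> 0 <= f k) -> 0 <= rsum f n.
Proof. intros H. assert (rsum (fun _ => 0) n = 0). { induction n; simpl; auto. rewrite IHn; auto. lra. }
  rewrite <- H0. apply rsum_le. auto. Qed.
Lemma rsum_mono f n m : (n <= m)%nat -> (forall k, 0 <= f k) -> rsum f n <= rsum f m.
Proof. intros Hle Hf. induction Hle. lra. simpl. specialize (Hf m). lra. Qed.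
Lemma rsum_scal c f n : c * rsum f n = rsum (fun k => c * f k) n.
Proof. induction n; simpl. ring. rewrite <- IHn. ring. Qed.
Lemma rsum_plus f g n : rsum (fun k => f k + g k) n = rsum f n + rsum g n.
Proof. induction n; simpl. ring. rewrite IHn. ring. Qed.
Lemma rsum_f_R0 f n : rsum f (S n) = sum_f_R0 f n.
Proof. induction n; simpl. ring. simpl in IHn. rewrite <- IHn. ring. Qed.
Lemma rsum_S_l f n : rsum f (S n) = f 0%nat + rsum (fun k => f (S k)) n.
Proof. induction n; simpl. ring. simpl in IHn. rewrite IHn. ring. Qed.
Lemma csum_S_l f n : csum f (S n) = (f 0%nat + csum (fun k => f (S k)) n)%C.
Proof. induction n; simpl. apply injective_projections; simpl; ring. simpl in IHn. rewrite IHn.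
  apply injective_projections; simpl; ring. Qed.
Lemma rsum_term_le f n k : (k < n)%nat -> (forall i, 0 <= f i) -> f k <= rsum f n.
Proof. induction n; intros Hk H. lia. simpl. destruct (Nat.eq_dec k n). subst.
  pose proof (rsum_nonneg f n (fun i _ => H i)). lra.
  assert (f k <= rsum f n) by (apply IHn; auto; lia). specialize (H n). lra. Qed.
Lemma csum_kron (x : nat -> C) n a : (a < n)%nat ->
  csum (fun b => if Nat.eq_dec a b then x b else RtoC 0) n = x a.
Proof. induction n; intros Ha. lia. simpl. destruct (Nat.eq_dec a n).
  subst. rewrite (csum_ext _ (fun _ => RtoC 0)). rewrite csum_zero.
  apply injective_projections; simpl; ring. intros k Hk. destruct (Nat.eq_dec n k); auto; lia.
  rewrite IHn by lia. apply injective_projections; simpl; ring. Qed.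

Lemma pow_le1 x n : 0 <= x <= 1 -> x ^ n <= 1.
Proof. intros H. rewrite <- (pow1 n). apply pow_incr. lra. Qed.

Definition evalp (p : nat -> C) (n : nat) (z : C) : C := csum (fun k => p k * z ^ k)%C n.

Lemma evalp_bound p n z : Cmod z <= 1 -> Cmod (evalp p n z) <= rsum (fun k => Cmod (p k)) n.
Proof. intros Hz. eapply Rle_trans. apply csum_Cmod. apply rsum_le. intros k _.
  rewrite Cmod_mult, Cmod_pow. pose proof (Cmod_ge_0 (p k)). pose proof (Cmod_ge_0 z).
  assert (Cmod z ^ k <= 1). { apply pow_le1; auto. } nra. Qed.

Lemma evalp_S_l p n z : evalp p (S n) z = (p 0%nat + z * evalp (fun k => p (S k)) n z)%C.
Proof. unfold evalp. rewrite csum_S_l, csum_scal. f_equal.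
  apply injective_projections; simpl; ring.
  apply csum_ext. intros k _. simpl. apply injective_projections; simpl; ring. Qed.

Lemma evalp_pad p n k z : (n <= k)%nat ->
  evalp (fun a => if lt_dec a n then p a else RtoC 0) k z = evalp p n z.
Proof. intros H. induction H. unfold evalp. apply csum_ext. intros a Ha.
  destruct (lt_dec a n); [auto|lia].
  unfold evalp in *. simpl. rewrite IHle. destruct (lt_dec m n). lia.
  apply injective_projections; simpl; ring. Qed.

Lemma evalp_add p q n z : (evalp p n z + evalp q n z)%C = evalp (fun a => p a + q a)%C n z.
Proof. unfold evalp. rewrite <- csum_plus. apply csum_ext. intros; apply injective_projections; simpl; ring. Qed.

Definition IsPoly (f : C -> C) := exists n p, forall z, f z = evalp p n z.

Lemma IsPoly_ext f g : (forall z, f z = g z) -> IsPoly f -> IsPoly g.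
Proof. intros H [n [p Hp]]. exists n, p. intros z. rewrite <- H. auto. Qed.

Lemma IsPoly_add f g : IsPoly f -> IsPoly g -> IsPoly (fun z => f z + g z)%C.
Proof. intros [n [p Hp]] [m [q Hq]]. exists (max n m).
  exists (fun a => (if lt_dec a n then p a else RtoC 0) + (if lt_dec a m then q a else RtoC 0))%C.
  intros z. rewrite <- evalp_add, Hp, Hq. rewrite !evalp_pad; auto; lia. Qed.

Lemma IsPoly_scal c f : IsPoly f -> IsPoly (fun z => c * f z)%C.
Proof. intros [n [p Hp]]. exists n, (fun a => c * p a)%C. intros z. rewrite Hp. unfold evalp.
  rewrite csum_scal. apply csum_ext. intros; apply injective_projections; simpl; ring. Qed.

Lemma IsPoly_const c : IsPoly (fun _ => c).
Proof. exists 1%nat, (fun _ => c). intros z. unfold evalp. simpl. apply injective_projections; simpl; ring. Qed.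

Lemma IsPoly_mulz f : IsPoly f -> IsPoly (fun z => z * f z)%C.
Proof. intros [n [p Hp]]. exists (S n), (fun a => match a with O => RtoC 0 | S b => p b end).
  intros z. rewrite evalp_S_l, Hp. change (fun k => match S k with O => RtoC 0 | S b => p b end) with p.
  set (E := evalp p n z). clearbody E. apply injective_projections; simpl. ring. ring. Qed.

Lemma IsPoly_evalp p n : IsPoly (evalp p n).
Proof. exists n, p. auto. Qed.

Lemma IsPoly_mul f g : IsPoly f -> IsPoly g -> IsPoly (fun z => f z * g z)%C.
Proof. intros Hf [m [q Hq]]. apply (IsPoly_ext (fun z => f z * evalp q m z)%C).
  intros; rewrite Hq; auto. clear Hq. revert q. induction m; intros q.
  apply (IsPoly_ext (fun _ => RtoC 0)). intros z. unfold evalp; simpl.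
  apply injective_projections; simpl; ring. apply IsPoly_const.
  apply (IsPoly_ext (fun z => q 0%nat * f z + z * (f z * evalp (fun k => q (S k)) m z))%C).
  intros z. rewrite evalp_S_l. apply injective_projections; simpl; ring.
  apply IsPoly_add. apply IsPoly_scal; auto. apply IsPoly_mulz. apply IHm. Qed.

Lemma IsPoly_pow f m : IsPoly f -> IsPoly (fun z => f z ^ m)%C.
Proof. intros Hf. induction m. simpl. apply IsPoly_const. simpl. apply IsPoly_mul; auto. Qed.

Lemma Cmod_sub_tri a b c : Cmod (a - c) <= Cmod (a - b) + Cmod (b - c).
Proof. replace (a - c)%C with ((a - b) + (b - c))%C by ring. apply Cmod_triangle. Qed.
Lemma Cmod_le_sub a b : Cmod a <= Cmod b + Cmod (a - b).
Proof. replace a with (b + (a - b))%C at 1 by ring. apply Cmod_triangle. Qed.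

Definition Uc (f : C -> C) := forall eps, 0 < eps -> exists P, IsPoly P /\
  forall z, Cmod z <= 1 -> Cmod (f z - P z) <= eps.

Lemma IsPoly_bounded P : IsPoly P -> exists B, 0 <= B /\ forall z, Cmod z <= 1 -> Cmod (P z) <= B.
Proof. intros [n [p Hp]]. exists (rsum (fun k => Cmod (p k)) n). split.
  apply rsum_nonneg; intros; apply Cmod_ge_0. intros z Hz. rewrite Hp. apply evalp_bound; auto. Qed.

Lemma Uc_bounded f : Uc f -> exists B, 0 <= B /\ forall z, Cmod z <= 1 -> Cmod (f z) <= B.
Proof. intros H. destruct (H 1 Rlt_0_1) as [P [HP HfP]]. destruct (IsPoly_bounded P HP) as [B [HB0 HB]].
  exists (B + 1). split. lra. intros z Hz. pose proof (Cmod_le_sub (f z) (P z)). 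
  specialize (HB z Hz). specialize (HfP z Hz). lra. Qed.

Lemma Uc_poly f : IsPoly f -> Uc f.
Proof. intros H eps Heps. exists f. split; auto. intros z _. 
  replace (f z - f z)%C with (RtoC 0) by ring. rewrite Cmod_0. lra. Qed.

Lemma Uc_ext f g : (forall z, Cmod z <= 1 -> f z = g z) -> Uc f -> Uc g.
Proof. intros H Hf eps Heps. destruct (Hf eps Heps) as [P [HP HfP]]. exists P; split; auto.
  intros z Hz. rewrite <- H; auto. Qed.

Lemma Uc_add f g : Uc f -> Uc g -> Uc (fun z => f z + g z)%C.
Proof. intros Hf Hg eps Heps. destruct (Hf (eps/2)) as [P [HP HfP]]. lra.
  destruct (Hg (eps/2)) as [Q [HQ HgQ]]. lra. exists (fun z => P z + Q z)%C. split.
  apply IsPoly_add; auto. intros z Hz.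
  replace (f z + g z - (P z + Q z))%C with ((f z - P z) + (g z - Q z))%C by ring.
  eapply Rle_trans. apply Cmod_triangle. specialize (HfP z Hz). specialize (HgQ z Hz). lra. Qed.

Lemma Uc_mul f g : Uc f -> Uc g -> Uc (fun z => f z * g z)%C.
Proof. intros Hf Hg eps Heps. destruct (Uc_bounded f Hf) as [Bf [HBf0 HBf]].
  destruct (Uc_bounded g Hg) as [Bg [HBg0 HBg]].
  destruct (Hf (eps / (2 * (Bg + 1)))) as [P [HP HfP]]. apply Rdiv_lt_0_compat; lra.
  destruct (Hg (Rmin 1 (eps / (2 * (Bf + 1))))) as [Q [HQ HgQ]].
  apply Rmin_glb_lt. lra. apply Rdiv_lt_0_compat; lra.
  exists (fun z => P z * Q z)%C. split. apply IsPoly_mul; auto. intros z Hz.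
  replace (f z * g z - P z * Q z)%C with (f z * (g z - Q z) + Q z * (f z - P z))%C by ring.
  eapply Rle_trans. apply Cmod_triangle. rewrite !Cmod_mult.
  specialize (HfP z Hz). specialize (HgQ z Hz). specialize (HBf z Hz). specialize (HBg z Hz).
  pose proof (Cmod_le_sub (Q z) (g z)). 
  replace (Q z - g z)%C with (- (g z - Q z))%C in H by ring. rewrite Cmod_opp in H.
  pose proof (Rmin_l 1 (eps / (2 * (Bf + 1)))). pose proof (Rmin_r 1 (eps / (2 * (Bf + 1)))).
  set (m := Rmin 1 (eps / (2 * (Bf + 1)))) in *.
  assert (Cmod (Q z) <= Bg + 1) by lra.
  assert (Bf * m <= eps / 2).
  { apply Rle_trans with ((Bf + 1) * (eps / (2 * (Bf + 1)))). 
    apply Rmult_le_compat; try lra. unfold m; apply Rmin_glb; try lra. 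
    apply Rlt_le, Rdiv_lt_0_compat; lra. right; field; lra. }
  assert ((Bg + 1) * (eps / (2 * (Bg + 1))) = eps / 2) by (field; lra).
  pose proof (Cmod_ge_0 (f z)). pose proof (Cmod_ge_0 (Q z)).
  pose proof (Cmod_ge_0 (g z - Q z)). pose proof (Cmod_ge_0 (f z - P z)).
  assert (Cmod (f z) * Cmod (g z - Q z) <= Bf * m) by (apply Rmult_le_compat; lra).
  assert (Cmod (Q z) * Cmod (f z - P z) <= (Bg + 1) * (eps / (2 * (Bg + 1)))) by (apply Rmult_le_compat; lra).
  lra. Qed.

Lemma Uc_const c : Uc (fun _ => c).
Proof. apply Uc_poly, IsPoly_const. Qed.

Lemma Uc_pow f m : Uc f -> Uc (fun z => f z ^ m)%C.
Proof. intros Hf. induction m. apply (Uc_ext (fun _ => RtoC 1)). intros; reflexivity. apply Uc_const.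
  apply (Uc_ext (fun z => f z * f z ^ m)%C). intros; reflexivity. apply Uc_mul; auto. Qed.

Lemma Uc_limit f : (forall eps, 0 < eps -> exists g, Uc g /\ forall z, Cmod z <= 1 -> Cmod (f z - g z) <= eps) -> Uc f.
Proof. intros H eps Heps. destruct (H (eps/2)) as [g [Hg Hfg]]. lra.
  destruct (Hg (eps/2)) as [P [HP HgP]]. lra. exists P. split; auto. intros z Hz.
  eapply Rle_trans. apply (Cmod_sub_tri _ (g z)). specialize (Hfg z Hz). specialize (HgP z Hz). lra. Qed.

Definition ex (x : R) : C := (cos x, sin x).
Lemma ex_mul x y : (ex x * ex y)%C = ex (x + y).
Proof. unfold ex. rewrite cos_plus, sin_plus. apply injective_projections; simpl; ring. Qed.
Lemma ex_pow x n : (ex x ^ n)%C = ex (INR n * x).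
Proof. induction n. simpl. unfold ex. rewrite Rmult_0_l, cos_0, sin_0. reflexivity.
  simpl (ex x ^ S n)%C. rewrite IHn, ex_mul. f_equal. rewrite S_INR. ring. Qed.
Lemma Cmod_ex x : Cmod (ex x) = 1.
Proof. unfold Cmod, ex. simpl. pose proof (sin2_cos2 x). unfold Rsqr in H.
  replace (cos x * (cos x * 1) + sin x * (sin x * 1)) with 1 by lra. apply sqrt_1. Qed.
Lemma ex_conj x : Cconj (ex x) = ex (- x).
Proof. unfold ex, Cconj. rewrite cos_neg, sin_neg. reflexivity. Qed.

Definition mu (M j : nat) : C := ex (2 * PI * INR j / INR M).

Lemma csum_const c n : csum (fun _ => c) n = (INR n * c)%C.
Proof. induction n. simpl. apply injective_projections; simpl; ring.
  simpl csum. rewrite IHn, S_INR. apply injective_projections; simpl; ring. Qed.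

Lemma csum_geom z n : ((1 - z) * csum (fun j => z ^ j) n = 1 - z ^ n)%C.
Proof. induction n. simpl. ring. simpl csum. rewrite Cmult_plus_distr_l, IHn. simpl. ring. Qed.

Lemma ex_ne_1 x : 0 < x < 2 * PI -> ex x <> RtoC 1.
Proof. intros Hx Heq. unfold ex in Heq. injection Heq as H1 H2.
  destruct (Rtotal_order x PI) as [Hlt|[Heqp|Hgt]].
  pose proof (sin_gt_0 x). lra. subst. rewrite cos_PI in H1. lra.
  pose proof (sin_lt_0 x). lra. Qed.

Lemma Cmult_eq0 a b : (a * b)%C = RtoC 0 -> a <> RtoC 0 -> b = RtoC 0.
Proof. intros H Ha. apply Cmod_eq_0. assert (Cmod (a * b) = 0) by (rewrite H; apply Cmod_0).
  rewrite Cmod_mult in H0. apply Cmod_gt_0 in Ha. nra. Qed.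

Lemma orth_pos M n m : (m < n < M)%nat ->
  csum (fun j => (mu M j ^ n) * Cconj (mu M j ^ m))%C M = RtoC 0.
Proof. intros H. assert (HM : 0 < INR M) by (apply lt_0_INR; lia).
  set (x := 2 * PI * INR (n - m) / INR M).
  rewrite (csum_ext _ (fun j => ex x ^ j)%C).
  2:{ intros j _. unfold mu. rewrite !ex_pow, ex_conj, ex_mul. f_equal.
      unfold x. rewrite minus_INR by lia. field. lra. }
  assert (Hz : ex x <> RtoC 1).
  { apply ex_ne_1. unfold x. assert (0 < INR (n - m)) by (apply lt_0_INR; lia).
    assert (INR (n - m) < INR M) by (apply lt_INR; lia). pose proof PI_RGT_0. split.
    apply Rdiv_lt_0_compat; nra. apply Rmult_lt_reg_r with (INR M); auto.
    unfold Rdiv. rewrite Rmult_assoc, Rinv_l by lra. nra. }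
  apply (Cmult_eq0 (1 - ex x)). rewrite csum_geom, ex_pow.
  unfold x. replace (INR M * (2 * PI * INR (n - m) / INR M)) with (0 + 2 * INR (n - m) * PI) by (field; lra).
  unfold ex. rewrite cos_period, sin_period, cos_0, sin_0. apply injective_projections; simpl; ring.
  intros Habs. apply Hz. replace (ex x) with (1 - (1 - ex x))%C by ring. rewrite Habs. ring. Qed.

Lemma orth M n m : (n < M)%nat -> (m < M)%nat ->
  csum (fun j => (mu M j ^ n) * Cconj (mu M j ^ m))%C M =
  if Nat.eq_dec n m then RtoC (INR M) else RtoC 0.
Proof. intros Hn Hm. destruct (Nat.eq_dec n m).
  subst. rewrite (csum_ext _ (fun _ => RtoC 1)). rewrite csum_const. ring.
  intros j _. unfold mu. rewrite ex_pow, ex_conj, ex_mul. rewrite Rplus_opp_r. unfold ex.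
  rewrite cos_0, sin_0. reflexivity.
  destruct (Nat.lt_total m n) as [Hlt|[Heq|Hgt]]. apply orth_pos; lia. lia.
  rewrite (csum_ext _ (fun j => Cconj ((mu M j ^ m) * Cconj (mu M j ^ n)))%C).
  rewrite <- csum_conj, orth_pos by lia. apply injective_projections; simpl; ring.
  intros j _. rewrite Cmult_conj, Cconj_conj. ring. Qed.

Lemma csum_mul f g n m : (csum f n * csum g m)%C = csum (fun a => csum (fun b => f a * g b) m)%C n.
Proof. induction n. simpl. ring. simpl csum. rewrite Cmult_plus_distr_r, IHn. f_equal.
  apply csum_scal. Qed.

Lemma Cmod2_fst c : Cmod c ^ 2 = fst (c * Cconj c)%C.
Proof. rewrite <- Cmod2_conj. reflexivity. Qed.

Lemma parseval M p n : (0 < M)%nat -> (n <= M)%nat ->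
  INR M * rsum (fun a => Cmod (p a) ^ 2) n = rsum (fun j => Cmod (evalp p n (mu M j)) ^ 2) M.
Proof. intros HM Hn.
  rewrite (rsum_ext (fun j => Cmod (evalp p n (mu M j)) ^ 2) (fun j => fst (evalp p n (mu M j) * Cconj (evalp p n (mu M j)))%C)).
  2: intros; apply Cmod2_fst.
  rewrite <- csum_fst. unfold evalp.
  rewrite (csum_ext _ (fun j => csum (fun a => csum (fun b => p a * Cconj (p b) * ((mu M j ^ a) * Cconj (mu M j ^ b))) n) n))%C.
  2:{ intros j _. rewrite csum_conj, csum_mul. apply csum_ext. intros a _. apply csum_ext. intros b _.
      rewrite Cmult_conj. ring. }
  rewrite csum_swap. 
  rewrite (csum_ext _ (fun a => p a * Cconj (p a) * INR M))%C.
  2:{ intros a Ha. rewrite csum_swap. 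
      rewrite (csum_ext _ (fun b => if Nat.eq_dec a b then p b * Cconj (p b) * INR M else RtoC 0))%C.
      apply csum_kron; auto.
      intros b Hb. rewrite <- csum_scal, orth by lia. destruct (Nat.eq_dec a b). subst. ring. ring. }
  rewrite csum_fst, rsum_scal. apply rsum_ext. intros a _. rewrite Cmod2_fst. simpl. ring. Qed.

Lemma Cmod_mu M j : Cmod (mu M j) = 1.
Proof. apply Cmod_ex. Qed.

Lemma rsum_const c n : rsum (fun _ => c) n = INR n * c.
Proof. induction n. simpl; ring. change (rsum (fun _ => c) n + c = INR (S n) * c).
  rewrite IHn, S_INR. ring. Qed.

Lemma coef_bound p n K : (forall z, Cmod z = 1 -> Cmod (evalp p n z) <= K) ->
  forall a, (a < n)%nat -> Cmod (p a) <= K.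
Proof. intros H a Ha. assert (HK : 0 <= K). { specialize (H (mu n 0) (Cmod_mu _ _)). 
    pose proof (Cmod_ge_0 (evalp p n (mu n 0))). lra. }
  pose proof (parseval n p n ltac:(lia) (le_n _)) as HP.
  assert (rsum (fun j => Cmod (evalp p n (mu n j)) ^ 2) n <= rsum (fun _ => K ^ 2) n).
  { apply rsum_le. intros j _. specialize (H (mu n j) (Cmod_mu _ _)).
    pose proof (Cmod_ge_0 (evalp p n (mu n j))). apply pow_incr. lra. }
  assert (rsum (fun _ => K ^ 2) n = INR n * K ^ 2).
  { apply rsum_const. }
  assert (Hn : 0 < INR n) by (apply lt_0_INR; lia).
  assert (rsum (fun a => Cmod (p a) ^ 2) n <= K ^ 2) by nra.
  assert (Cmod (p a) ^ 2 <= K ^ 2).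
  { eapply Rle_trans; [|exact H2]. apply (rsum_term_le (fun a => Cmod (p a) ^ 2)); auto. intros; apply pow2_ge_0. }
  pose proof (Cmod_ge_0 (p a)). nra. Qed.

Lemma geom_bound x n : 0 <= x < 1 -> rsum (fun a => x ^ a) n <= 1 / (1 - x).
Proof. intros Hx. assert (rsum (fun a => x ^ a) n * (1 - x) = 1 - x ^ n).
  { induction n. simpl; ring. change ((rsum (fun a => x ^ a) n + x ^ n) * (1 - x) = 1 - x ^ S n).
    rewrite Rmult_plus_distr_r, IHn. simpl. ring. }
  assert (0 <= x ^ n) by (apply pow_le; lra).
  apply Rmult_le_reg_r with (1 - x). lra. rewrite H. unfold Rdiv. rewrite Rmult_1_l, Rinv_l; lra. Qed.

Lemma poly_inner p n K l : (forall z, Cmod z = 1 -> Cmod (evalp p n z) <= K) ->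
  Cmod l < 1 -> Cmod (evalp p n l) <= K / (1 - Cmod l).
Proof. intros H Hl. pose proof (coef_bound p n K H) as Hc.
  pose proof (Cmod_ge_0 l).
  eapply Rle_trans. apply csum_Cmod. 
  apply Rle_trans with (rsum (fun a => K * Cmod l ^ a) n).
  apply rsum_le. intros a Ha. rewrite Cmod_mult, Cmod_pow. apply Rmult_le_compat_r.
  apply pow_le; lra. auto.
  destruct n. simpl. apply Rdiv_le_0_compat.
  { specialize (H (mu 1 0) (Cmod_mu _ _)). pose proof (Cmod_ge_0 (evalp p 0 (mu 1 0))). lra. } lra.
  assert (0 <= K) by (specialize (Hc 0%nat ltac:(lia)); pose proof (Cmod_ge_0 (p 0%nat)); lra).
  rewrite <- rsum_scal. unfold Rdiv. rewrite <- (Rmult_1_l (/ (1 - Cmod l))).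
  apply Rmult_le_compat_l; auto. apply geom_bound. lra. Qed.

Lemma eps_le x y c : 0 <= c -> (forall eps, 0 < eps -> x <= y + c * eps) -> x <= y.
Proof. intros Hc H. destruct (Rle_dec x y) as [|Hxy]; auto. exfalso.
  assert (0 < (x - y) / (2 * (c + 1))) by (apply Rdiv_lt_0_compat; lra).
  specialize (H _ H0). assert (c * ((x - y) / (2 * (c + 1))) < x - y).
  { apply Rle_lt_trans with ((c + 1) * ((x - y) / (2 * (c + 1)))). nra.
    replace ((c + 1) * ((x - y) / (2 * (c + 1)))) with ((x - y) / 2) by (field; lra). lra. }
  lra. Qed.

Lemma Uc_inner f K : Uc f -> (forall z, Cmod z = 1 -> Cmod (f z) <= K) ->
  forall l, Cmod l < 1 -> Cmod (f l) <= K / (1 - Cmod l).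
Proof. intros Hf HK l Hl. pose proof (Cmod_ge_0 l).
  apply (eps_le _ _ (1 + 1 / (1 - Cmod l))). apply Rplus_le_le_0_compat. lra.
  apply Rlt_le, Rdiv_lt_0_compat; lra.
  intros eps Heps. destruct (Hf eps Heps) as [P [[n [p Hp]] HfP]].
  assert (HPb : Cmod (P l) <= (K + eps) / (1 - Cmod l)).
  { rewrite Hp. apply poly_inner; auto. intros z Hz. rewrite <- Hp.
    pose proof (Cmod_le_sub (P z) (f z)). replace (P z - f z)%C with (- (f z - P z))%C in H0 by ring.
    rewrite Cmod_opp in H0. specialize (HfP z ltac:(lra)). specialize (HK z Hz). lra. }
  pose proof (Cmod_le_sub (f l) (P l)). specialize (HfP l ltac:(lra)).
  replace ((K + eps) / (1 - Cmod l)) with (K / (1 - Cmod l) + 1 / (1 - Cmod l) * eps) in HPb by (field; lra).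
  lra. Qed.

Lemma pow_bounded_le1 x C0 : 0 <= x -> (forall m, x ^ m <= C0) -> x <= 1.
Proof. intros Hx H. destruct (Rle_dec x 1) as [|Hx1]; auto. exfalso.
  assert (Hb : forall m, 1 + INR m * (x - 1) <= x ^ m).
  { induction m. simpl; lra. rewrite S_INR. simpl pow. 
    assert (0 <= INR m) by apply pos_INR.
    assert (x * (1 + INR m * (x - 1)) <= x * x ^ m) by (apply Rmult_le_compat_l; lra).
    assert (0 <= INR m * (x - 1) * (x - 1)) by (apply Rmult_le_pos; [apply Rmult_le_pos|]; lra).
    lra. }
  destruct (archimed (C0 / (x - 1))) as [Ha _].
  destruct (Rle_dec 0 (C0 / (x-1))).
  2: { specialize (Hb 0%nat). specialize (H 0%nat). simpl in *. 
       assert (C0 / (x - 1) >= 0) by (apply Rle_ge, Rdiv_le_0_compat; lra). lra. }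
  set (m := Z.to_nat (up (C0 / (x - 1)))).
  assert (INR m >= IZR (up (C0 / (x - 1)))).
  { unfold m. rewrite INR_IZR_INZ. rewrite Z2Nat.id. lra. apply le_IZR. lra. }
  specialize (Hb m). specialize (H m).
  assert (C0 / (x - 1) * (x - 1) = C0) by (field; lra). nra. Qed.

Lemma maxprin f : Uc f -> (forall z, Cmod z = 1 -> Cmod (f z) <= 1) ->
  forall l, Cmod l < 1 -> Cmod (f l) <= 1.
Proof. intros Hf H l Hl. apply (pow_bounded_le1 _ (1 / (1 - Cmod l))). apply Cmod_ge_0.
  intros m. rewrite <- Cmod_pow. apply (Uc_inner (fun z => f z ^ m)%C 1). apply Uc_pow; auto.
  intros z Hz. rewrite Cmod_pow. apply pow_le1. split. apply Cmod_ge_0. auto. auto. Qed.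

Lemma Cmod_le_abs z : Cmod z <= Rabs (fst z) + Rabs (snd z).
Proof. unfold Cmod. rewrite <- (sqrt_pow2 (Rabs (fst z) + Rabs (snd z))).
  apply sqrt_le_1_alt. pose proof (Rabs_pos (fst z)). pose proof (Rabs_pos (snd z)).
  rewrite <- (pow2_abs (fst z)), <- (pow2_abs (snd z)). nra.
  pose proof (Rabs_pos (fst z)). pose proof (Rabs_pos (snd z)). lra. Qed.

Lemma series_terms_bounded (u : nat -> R) l : Un_cv (fun N => sum_f_R0 u N) l ->
  exists B, forall k, Rabs (u k) <= B.
Proof. intros H. destruct (H 1 Rlt_0_1) as [N0 HN0].
  exists (2 + rsum (fun i => Rabs (u i)) (S N0)). intros k.
  assert (0 <= rsum (fun i => Rabs (u i)) (S N0)) by (apply rsum_nonneg; intros; apply Rabs_pos).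
  destruct (le_lt_dec k N0).
  - assert (Rabs (u k) <= rsum (fun i => Rabs (u i)) (S N0)).
    { apply (rsum_term_le (fun i => Rabs (u i))). lia. intros; apply Rabs_pos. } lra.
  - destruct k. lia. assert (HA := HN0 (S k) ltac:(lia)). assert (HB := HN0 k ltac:(lia)).
    unfold R_dist in *. simpl in HA. 
    replace (u (S k)) with ((sum_f_R0 u k + u (S k) - l) - (sum_f_R0 u k - l)) by ring.
    eapply Rle_trans. apply Rabs_triang. rewrite Rabs_Ropp. lra. Qed.

Definition cc (b : nat -> Cx) (n : nat) : C := (RtoC (INR (S n)) * b (S n))%C.

Lemma Cpow_eq z n : Defs.Cpow z n = (z ^ n)%C.
Proof. induction n; simpl; auto. Qed.

Lemma term_eq b z k : Cmul (Defs.RtoC (INR (S k))) (Cmul (b (S k)) (Defs.Cpow z k)) = (cc b k * z ^ k)%C.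
Proof. rewrite Cpow_eq. unfold cc. change (RtoC (INR (S k)) * (b (S k) * z ^ k) = RtoC (INR (S k)) * b (S k) * z ^ k)%C.
  ring. Qed.

Lemma psum_fst b z N : sum_f_R0 (fun k => fst (Cmul (Defs.RtoC (INR (S k))) (Cmul (b (S k)) (Defs.Cpow z k)))) N
  = fst (evalp (cc b) (S N) z).
Proof. unfold evalp. rewrite csum_fst, rsum_f_R0. apply sum_eq. intros; rewrite term_eq; auto. Qed.
Lemma psum_snd b z N : sum_f_R0 (fun k => snd (Cmul (Defs.RtoC (INR (S k))) (Cmul (b (S k)) (Defs.Cpow z k)))) N
  = snd (evalp (cc b) (S N) z).
Proof. unfold evalp. rewrite csum_snd, rsum_f_R0. apply sum_eq. intros; rewrite term_eq; auto. Qed.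

Lemma geom_coef b : in_class_B b -> exists B, 0 <= B /\ forall n, Cmod (cc b n) <= B * (10/9) ^ n.
Proof. intros [_ H2]. destruct (H2 (RtoC (9/10))) as [l [[Hf Hs] _]].
  { change (Cmod (RtoC (9/10)) < 1). rewrite Cmod_R, Rabs_pos_eq; lra. }
  destruct (series_terms_bounded _ _ Hf) as [B1 HB1]. destruct (series_terms_bounded _ _ Hs) as [B2 HB2].
  exists (B1 + B2). split. specialize (HB1 0%nat). specialize (HB2 0%nat).
  pose proof (Rabs_pos (fst (Cmul (Defs.RtoC (INR 1)) (Cmul (b 1%nat) (Defs.Cpow (RtoC (9 / 10)) 0))))).
  pose proof (Rabs_pos (snd (Cmul (Defs.RtoC (INR 1)) (Cmul (b 1%nat) (Defs.Cpow (RtoC (9 / 10)) 0))))). lra.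
  intros n. specialize (HB1 n). specialize (HB2 n). rewrite term_eq in HB1, HB2.
  change (Defs.RtoC (9/10)) with (RtoC (9/10)) in HB1, HB2.
  pose proof (Cmod_le_abs (cc b n * RtoC (9/10) ^ n)%C).
  assert (Hm : Cmod (cc b n * RtoC (9/10) ^ n)%C = Cmod (cc b n) * (9/10) ^ n).
  { rewrite Cmod_mult, <- RtoC_pow, Cmod_R, Rabs_pos_eq; auto. apply pow_le; lra. }
  rewrite Hm in H.
  assert (0 < (9/10) ^ n) by (apply pow_lt; lra).
  assert ((10/9) ^ n * (9/10) ^ n = 1) by (rewrite <- Rpow_mult_distr; replace (10/9*(9/10)) with 1 by field; apply pow1).
  apply Rmult_le_reg_r with ((9/10)^n); auto. rewrite Rmult_assoc, H1. lra. Qed.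

Lemma evalp_split p L m z : evalp p (L + m) z = (evalp p L z + csum (fun k => p (L + k)%nat * z ^ (L + k)) m)%C.
Proof. induction m. rewrite Nat.add_0_r. simpl. ring. rewrite Nat.add_succ_r. unfold evalp in *. simpl csum.
  rewrite IHm. ring. Qed.

Lemma lim_close (S : nat -> C) l w E K0 :
  Un_cv (fun K => fst (S K)) (fst l) -> Un_cv (fun K => snd (S K)) (snd l) ->
  (forall K, (K0 <= K)%nat -> Cmod (S K - w) <= E) -> Cmod (l - w) <= E.
Proof. intros H1 H2 H3. apply (eps_le _ _ 2). lra. intros eps Heps.
  destruct (H1 eps Heps) as [N1 HN1]. destruct (H2 eps Heps) as [N2 HN2].
  set (K := (N1 + N2 + K0)%nat). specialize (HN1 K ltac:(lia)). specialize (HN2 K ltac:(lia)).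
  specialize (H3 K ltac:(lia)). unfold R_dist in *.
  pose proof (Cmod_le_abs (l - S K)%C). pose proof (Cmod_sub_tri l (S K) w).
  replace (fst (l - S K)%C) with (- (fst (S K) - fst l)) in H by (simpl; ring).
  replace (snd (l - S K)%C) with (- (snd (S K) - snd l)) in H by (simpl; ring).
  rewrite !Rabs_Ropp in H. lra. Qed.

Lemma sqrt3_bounds : 5/3 < sqrt 3 < 2.
Proof. split. rewrite <- (sqrt_pow2 (5/3)) by lra. apply sqrt_lt_1_alt. lra.
  rewrite <- (sqrt_pow2 2) by lra. apply sqrt_lt_1_alt. lra. Qed.

Lemma Pbound b : in_class_B b -> exists B, 0 <= B /\ forall L z, Cmod z <= 1 / sqrt 3 ->
  Cmod (evalp (cc b) L z) <= 3/2 + 3 * B * (2/3) ^ L.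
Proof. intros Hb. destruct (geom_coef b Hb) as [B [HB0 HB]]. exists B. split; auto.
  intros L z Hz. pose proof sqrt3_bounds as Hs3. pose proof (Cmod_ge_0 z) as Hz0.
  assert (Hz1 : Cmod z <= 3/5).
  { eapply Rle_trans. apply Hz. unfold Rdiv. rewrite Rmult_1_l.
    replace (3 * / 5) with (/ (5/3)) by field. apply Rinv_le_contravar; lra. }
  destruct Hb as [_ H2]. destruct (H2 z) as [l [[Hf Hs] Hl]]. change (Cmod z < 1). lra.
  change (Cmod l <= 1 / (1 - Cmod z ^ 2)) in Hl.
  assert (Hz2 : Cmod z ^ 2 <= 1/3).
  { assert (Cmod z ^ 2 <= (1 / sqrt 3) ^ 2) by (apply pow_incr; lra). 
    replace ((1 / sqrt 3) ^ 2) with (1 / (sqrt 3 ^ 2)) in H by (field; lra).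
    rewrite pow2_sqrt in H; lra. }
  assert (Hl2 : Cmod l <= 3/2).
  { eapply Rle_trans. apply Hl. apply Rmult_le_reg_r with (1 - Cmod z ^ 2). lra.
    unfold Rdiv. rewrite Rmult_assoc, Rinv_l, Rmult_1_r; lra. }
  assert (Ht : Cmod (l - evalp (cc b) L z) <= 3 * B * (2/3) ^ L).
  { apply (lim_close (fun K => evalp (cc b) (S K) z) _ _ _ L).
    eapply Un_cv_ext; [|exact Hf]. intros; apply psum_fst.
    eapply Un_cv_ext; [|exact Hs]. intros; apply psum_snd.
    intros K HK. replace (S K) with (L + (S K - L))%nat by lia. rewrite evalp_split.
    replace (evalp (cc b) L z + csum (fun k => cc b (L + k)%nat * z ^ (L + k)) (S K - L) - evalp (cc b) L z)%C
      with (csum (fun k => cc b (L + k)%nat * z ^ (L + k)) (S K - L))%C by ring.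
    eapply Rle_trans. apply csum_Cmod.
    apply Rle_trans with (rsum (fun k => B * (2/3) ^ L * (2/3) ^ k) (S K - L)).
    apply rsum_le. intros k _. rewrite Cmod_mult, Cmod_pow. 
    apply Rle_trans with (B * (10/9) ^ (L + k) * (3/5) ^ (L + k)).
    apply Rmult_le_compat; auto. apply Cmod_ge_0. apply pow_le; auto. apply pow_incr; lra.
    rewrite Rmult_assoc, <- Rpow_mult_distr. right. 
    replace (10/9 * (3/5)) with (2/3) by field. rewrite pow_add. ring.
    rewrite <- rsum_scal. replace (3 * B * (2/3) ^ L) with (B * (2/3) ^ L * (1 / (1 - 2/3))) by (field).
    apply Rmult_le_compat_l. apply Rmult_le_pos; auto. apply pow_le; lra. apply geom_bound. lra. }
  pose proof (Cmod_le_sub (evalp (cc b) L z) l). 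
  replace (evalp (cc b) L z - l)%C with (- (l - evalp (cc b) L z))%C in H by ring. rewrite Cmod_opp in H. lra.
Qed.

(* ---------- core: Schwarz + Parseval ---------- *)
Lemma mobius_id x a : Cmod (x - RtoC a) ^ 2 = Cmod (1 - RtoC a * x) ^ 2 + (1 - a ^ 2) * (Cmod x ^ 2 - 1).
Proof. rewrite !Cmod2_alt. unfold Re, Im. simpl. ring. Qed.

Lemma Cmod_one_minus y : 1 - Cmod y <= Cmod (1 - y).
Proof. pose proof (Cmod_le_sub 1 y). rewrite Cmod_1 in H.
  replace (1 - y)%C with (- (y - 1))%C by ring. rewrite Cmod_opp.
  pose proof (Cmod_le_sub 1 y). replace (1 - y)%C with (- (y - 1))%C in H0 by ring. rewrite Cmod_opp, Cmod_1 in H0.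
  lra. Qed.

Lemma IsPoly_csum (F : nat -> C -> C) J : (forall k, IsPoly (F k)) -> IsPoly (fun z => csum (fun k => F k z) J).
Proof. intros H. induction J. simpl. apply IsPoly_const. simpl. apply IsPoly_add; auto. Qed.

Lemma Uc_inv_geom (Om : C -> C) a m0 : IsPoly Om -> 0 < m0 -> 0 <= a ->
  (forall z, Cmod z <= 1 -> a * Cmod (Om z) <= 1 - m0) ->
  Uc (fun z => / (1 - RtoC a * Om z))%C.
Proof. intros HP Hm0 Ha Hb. apply Uc_limit. intros eps Heps.
  assert (Hm1 : 0 <= 1 - m0).
  { specialize (Hb 0 ltac:(rewrite Cmod_0; lra)). pose proof (Cmod_ge_0 (Om 0)).
    assert (0 <= a * Cmod (Om 0)) by (apply Rmult_le_pos; auto). lra. }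
  assert (Hq : Rabs (1 - m0) < 1) by (rewrite Rabs_pos_eq; lra).
  destruct (pow_lt_1_zero _ Hq (eps * m0)) as [J HJ]. apply Rmult_lt_0_compat; lra.
  exists (fun z => csum (fun k => (RtoC a * Om z) ^ k) J)%C. split.
  apply Uc_poly. apply IsPoly_csum. intros k. apply IsPoly_pow. apply IsPoly_scal. auto.
  intros z Hz. set (x := (RtoC a * Om z)%C).
  assert (Hx : Cmod x <= 1 - m0). { unfold x. rewrite Cmod_mult, Cmod_R, Rabs_pos_eq; auto. }
  assert (H1x : m0 <= Cmod (1 - x)). { pose proof (Cmod_one_minus x). lra. }
  assert (Hnz : (1 - x)%C <> RtoC 0). { intros Habs. rewrite Habs, Cmod_0 in H1x. lra. }
  pose proof (csum_geom x J) as HG.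
  replace (/ (1 - x) - csum (fun k => x ^ k) J)%C with (x ^ J / (1 - x))%C.
  2:{ assert (HG2 : (csum (fun k => x ^ k) J = / (1 - x) * (1 - x ^ J))%C).
      { rewrite <- HG. field. auto. }
      rewrite HG2. field. auto. }
  rewrite Cmod_div, Cmod_pow by auto. specialize (HJ J (le_n _)).
  rewrite Rabs_pos_eq in HJ by (apply pow_le; lra).
  assert (Cmod x ^ J <= (1 - m0) ^ J) by (apply pow_incr; split; [apply Cmod_ge_0|auto]).
  apply Rmult_le_reg_r with (Cmod (1 - x)). lra. unfold Rdiv. rewrite Rmult_assoc, Rinv_l by lra.
  assert (eps * m0 <= eps * Cmod (1 - x)) by (apply Rmult_le_compat_l; lra). lra. Qed.

Lemma Cpow_mul a b n : ((a * b) ^ n = a ^ n * b ^ n)%C.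
Proof. induction n; simpl. ring. rewrite IHn. ring. Qed.

Lemma evalp_scal c p n z : (c * evalp p n z)%C = evalp (fun k => c * p k)%C n z.
Proof. unfold evalp. rewrite csum_scal. apply csum_ext. intros; ring. Qed.

Lemma evalp_scale p n (rho : R) z : evalp p n (RtoC rho * z)%C = evalp (fun k => p k * RtoC (rho ^ k))%C n z.
Proof. unfold evalp. apply csum_ext. intros k _. rewrite Cpow_mul, <- RtoC_pow. ring. Qed.

Lemma sq_le x y : 0 <= y -> x ^ 2 <= y ^ 2 -> x <= y.
Proof. intros Hy H. destruct (Rle_dec x y); auto. nra. Qed.

Lemma core (d : nat -> C) (al : R) (E : nat -> R) :
  0 < al <= 2/3 ->
  d 0%nat = RtoC al ->
  (forall L z, Cmod z <= 1 -> Cmod (evalp d L z) <= 1 + E L) ->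
  (forall eps, 0 < eps -> exists L0, forall L, (L0 <= L)%nat -> E L <= eps) ->
  (forall L, 0 <= E L) ->
  forall rho, 0 < rho < 1 -> forall N,
  rsum (fun n => Cmod (d (S n)) ^ 2 * rho ^ (2 * S n)) N * (1 - al ^ 2 * rho ^ 2) <= rho ^ 2 * (1 - al ^ 2) ^ 2.
Proof.
  intros Hal Hd0 HdE HE HE0 rho Hrho N.
  set (m0 := (1 - al) / 2). set (beta := 1 - al ^ 2).
  assert (Hm0 : 1/6 <= m0 <= 1/2) by (unfold m0; lra).
  assert (Hbeta : 0 <= beta <= 1) by (unfold beta; nra).
  apply (eps_le _ _ (57 / m0 ^ 2)). apply Rlt_le, Rdiv_lt_0_compat; nra.
  intros eps Heps.
  set (eps1 := Rmin (m0 ^ 2 / 3) eps).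
  assert (Heps1 : 0 < eps1) by (apply Rmin_glb_lt; nra).
  destruct (HE eps1 Heps1) as [L0 HL0].
  set (L' := (L0 + N)%nat). set (L := S L').
  set (ep := E L).
  assert (Hep : 0 <= ep <= eps1) by (split; [apply HE0 | apply HL0; unfold L, L'; lia]).
  assert (He1 : eps1 <= m0 ^ 2 / 3) by apply Rmin_l.
  assert (He2 : eps1 <= eps) by apply Rmin_r.
  assert (Hep1 : ep <= m0 ^ 2 / 3) by lra.
  assert (Hep2 : ep <= eps) by lra.
  assert (Hepm : ep <= m0) by nra.
  set (Om := evalp d L). set (V := evalp (fun k => d (S k)) L').
  assert (HOm : forall z, Om z = (RtoC al + z * V z)%C).
  { intros z. unfold Om, V, L. rewrite evalp_S_l, Hd0. reflexivity. }
  assert (Hbd : forall z, Cmod z <= 1 -> Cmod (Om z) <= 1 + ep) by (intros; apply HdE; auto).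
  assert (Hlow1 : forall z, Cmod z <= 1 -> al * Cmod (Om z) <= 1 - m0).
  { intros z Hz. specialize (Hbd z Hz). assert (al * Cmod (Om z) <= al * (1 + ep)) by (apply Rmult_le_compat_l; lra).
    unfold m0 in *. nra. }
  assert (Hlow : forall z, Cmod z <= 1 -> m0 <= Cmod (1 - RtoC al * Om z)).
  { intros z Hz. pose proof (Cmod_one_minus (RtoC al * Om z)). rewrite Cmod_mult, Cmod_R, Rabs_pos_eq in H by lra.
    specialize (Hlow1 z Hz). lra. }
  set (K2 := 1 + 3 * ep / m0 ^ 2).
  assert (HK2 : 1 <= K2 <= 2).
  { unfold K2. split. assert (0 <= 3 * ep / m0 ^ 2) by (apply Rdiv_le_0_compat; nra). lra.
    assert (3 * ep / m0 ^ 2 <= 1). { apply Rmult_le_reg_r with (m0 ^ 2). nra. unfold Rdiv.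
      rewrite Rmult_assoc, Rinv_l by nra. lra. } lra. }
  set (K := sqrt K2).
  assert (HK : K ^ 2 = K2) by (apply pow2_sqrt; lra).
  assert (HK0 : 0 < K) by (apply sqrt_lt_R0; lra).
  assert (Hcirc : forall z, Cmod z = 1 -> Cmod (V z) <= K * Cmod (1 - RtoC al * Om z)).
  { intros z Hz. assert (HV : Cmod (V z) = Cmod (Om z - RtoC al)).
    { rewrite HOm. replace (RtoC al + z * V z - RtoC al)%C with (z * V z)%C by ring.
      rewrite Cmod_mult, Hz. ring. }
    apply sq_le. apply Rmult_le_pos; [lra | apply Cmod_ge_0].
    rewrite HV, mobius_id. fold beta. rewrite Rpow_mult_distr, HK.
    specialize (Hbd z ltac:(lra)). specialize (Hlow z ltac:(lra)).
    pose proof (Cmod_ge_0 (Om z)).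
    assert (Cmod (Om z) ^ 2 - 1 <= 3 * ep) by nra.
    assert (beta * (Cmod (Om z) ^ 2 - 1) <= 3 * ep).
    { destruct (Rle_dec 0 (Cmod (Om z) ^ 2 - 1)). apply Rle_trans with (1 * (3 * ep)).
      apply Rmult_le_compat; lra. lra. nra. }
    set (w := Cmod (1 - RtoC al * Om z)) in *.
    assert (3 * ep <= 3 * ep / m0 ^ 2 * w ^ 2).
    { assert (m0 ^ 2 <= w ^ 2) by (apply pow_incr; lra).
      apply Rle_trans with (3 * ep / m0 ^ 2 * m0 ^ 2). right. field. lra.
      apply Rmult_le_compat_l. apply Rdiv_le_0_compat; nra. auto. }
    unfold K2. lra. }
  set (f := fun z => (V z * / (1 - RtoC al * Om z) * RtoC (/ K))%C).
  assert (Hf : Uc f).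
  { apply Uc_mul. apply Uc_mul. apply Uc_poly, IsPoly_evalp.
    apply (Uc_inv_geom Om al m0). apply IsPoly_evalp. lra. lra. auto. apply Uc_const. }
  assert (Hfin : forall z, Cmod z < 1 -> Cmod (V z) <= K * Cmod (1 - RtoC al * Om z)).
  { intros z Hz. assert (Hnz : (1 - RtoC al * Om z)%C <> RtoC 0).
    { intros Habs. specialize (Hlow z ltac:(lra)). rewrite Habs, Cmod_0 in Hlow. lra. }
    assert (Cmod (f z) <= 1).
    { apply maxprin; auto. intros u Hu. unfold f. rewrite !Cmod_mult, Cmod_inv, Cmod_R, Rabs_pos_eq.
      2: apply Rlt_le, Rinv_0_lt_compat; lra.
      2:{ intros Habs. specialize (Hlow u ltac:(lra)). rewrite Habs, Cmod_0 in Hlow. lra. }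
      specialize (Hcirc u Hu). specialize (Hlow u ltac:(lra)).
      set (w := Cmod (1 - RtoC al * Om u)) in *.
      apply Rle_trans with (K * w * / w * / K). apply Rmult_le_compat_r. apply Rlt_le, Rinv_0_lt_compat; lra.
      apply Rmult_le_compat_r. apply Rlt_le, Rinv_0_lt_compat; lra. auto.
      right. field. split; lra. }
    unfold f in H. rewrite !Cmod_mult, Cmod_inv, Cmod_R, Rabs_pos_eq in H by (auto; apply Rlt_le, Rinv_0_lt_compat; lra).
    specialize (Hlow z ltac:(lra)). set (w := Cmod (1 - RtoC al * Om z)) in *.
    assert (Cmod (V z) = (Cmod (V z) * / w * / K) * (K * w)) by (field; split; lra).
    rewrite H0. pose proof (Cmod_ge_0 (V z)).
    rewrite <- (Rmult_1_l (K * w)) at 2. apply Rmult_le_compat_r. nra. auto. }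
  set (e := fun n => (d n * RtoC (rho ^ n))%C).
  set (p1 := fun n => match n with O => RtoC 0 | S k => e (S k) end).
  set (p2 := fun n => match n with O => RtoC beta | S k => (- (RtoC al * e (S k)))%C end).
  assert (HP1 : forall u, evalp p1 L u = (Om (RtoC rho * u) - RtoC al)%C).
  { intros u. unfold Om. rewrite evalp_scale. unfold L. rewrite !evalp_S_l.
    change (evalp (fun k => p1 (S k)) L' u) with (evalp (fun k => (d (S k) * RtoC (rho ^ S k))%C) L' u).
    rewrite Hd0. change (rho ^ 0) with 1. change (p1 0%nat) with (RtoC 0). 
    set (Q := evalp (fun k => (d (S k) * RtoC (rho ^ S k))%C) L' u). ring. }
  assert (HP2 : forall u, evalp p2 L u = (1 - RtoC al * Om (RtoC rho * u))%C).
  { intros u. pose proof (HP1 u) as H1u. unfold L in H1u |- *. rewrite evalp_S_l in H1u |- *.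
    assert (evalp (fun k => p2 (S k)) L' u = (- RtoC al * evalp (fun k => p1 (S k)) L' u)%C).
    { rewrite evalp_scal. unfold evalp. apply csum_ext. intros k _. unfold p1, p2. ring. }
    rewrite H. change (p2 0%nat) with (RtoC beta). change (p1 0%nat) with (RtoC 0) in H1u.
    set (Q := evalp (fun k => p1 (S k)) L' u) in *.
    assert (HQ : Om (RtoC rho * u)%C = (RtoC al + u * Q)%C).
    { rewrite <- (Cplus_0_l (u * Q)%C). rewrite H1u. ring. }
    rewrite HQ. unfold beta. apply injective_projections; simpl; ring. }
  assert (Hpt : forall j, Cmod (evalp p1 L (mu L j)) ^ 2 <= rho ^ 2 * K2 * Cmod (evalp p2 L (mu L j)) ^ 2).
  { intros j. rewrite HP1, HP2. set (z := (RtoC rho * mu L j)%C).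
    assert (Hz : Cmod z = rho). { unfold z. rewrite Cmod_mult, Cmod_mu, Cmod_R, Rabs_pos_eq; lra. }
    assert (Hm : Cmod (Om z - RtoC al) = rho * Cmod (V z)).
    { rewrite HOm. replace (RtoC al + z * V z - RtoC al)%C with (z * V z)%C by ring.
      rewrite Cmod_mult, Hz. reflexivity. }
    rewrite Hm. specialize (Hfin z ltac:(lra)).
    rewrite <- HK. pose proof (Cmod_ge_0 (V z)).
    replace (rho ^ 2 * K ^ 2 * Cmod (1 - RtoC al * Om z) ^ 2) with ((rho * (K * Cmod (1 - RtoC al * Om z))) ^ 2) by ring.
    apply pow_incr. split. apply Rmult_le_pos; lra. apply Rmult_le_compat_l; lra. }
  assert (HL : (0 < L)%nat) by (unfold L; lia).
  pose proof (parseval L p1 L HL (le_n _)) as HPa1.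
  pose proof (parseval L p2 L HL (le_n _)) as HPa2.
  set (A := rsum (fun a => Cmod (p1 a) ^ 2) L) in *.
  set (B2 := rsum (fun a => Cmod (p2 a) ^ 2) L) in *.
  assert (HAB : A <= rho ^ 2 * K2 * B2).
  { assert (INR L * A <= INR L * (rho ^ 2 * K2 * B2)).
    { rewrite HPa1. replace (INR L * (rho ^ 2 * K2 * B2)) with (rho ^ 2 * K2 * (INR L * B2)) by ring.
      rewrite HPa2, rsum_scal. apply rsum_le. intros; apply Hpt. }
    assert (0 < INR L) by (apply lt_0_INR; auto). nra. }
  set (A' := rsum (fun k => Cmod (e (S k)) ^ 2) L').
  assert (HA : A = A'). { unfold A, L. rewrite rsum_S_l. simpl (p1 0%nat). rewrite Cmod_0. 
    unfold A'. simpl. ring. }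
  assert (HB : B2 = beta ^ 2 + al ^ 2 * A').
  { unfold B2, L. rewrite rsum_S_l. unfold A'. rewrite rsum_scal. f_equal.
    simpl (p2 0%nat). rewrite Cmod_R. rewrite pow2_abs. reflexivity.
    apply rsum_ext. intros k _. simpl (p2 (S k)). rewrite Cmod_opp, Cmod_mult, Cmod_R. rewrite Rpow_mult_distr, pow2_abs. ring. }
  assert (HX : rsum (fun n => Cmod (d (S n)) ^ 2 * rho ^ (2 * S n)) N <= A').
  { unfold A'. apply Rle_trans with (rsum (fun n => Cmod (d (S n)) ^ 2 * rho ^ (2 * S n)) L').
    apply rsum_mono. unfold L'; lia. intros; apply Rmult_le_pos. apply pow2_ge_0. apply pow_le; lra.
    right. apply rsum_ext. intros k _. unfold e. rewrite Cmod_mult, Cmod_R, Rabs_pos_eq by (apply pow_le; lra).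
    rewrite Rpow_mult_distr, <- pow_mult, (Nat.mul_comm (S k) 2). reflexivity. }
  assert (HA0 : 0 <= A') by (unfold A'; apply rsum_nonneg; intros; apply pow2_ge_0).
  assert (HX0 : 0 <= rsum (fun n => Cmod (d (S n)) ^ 2 * rho ^ (2 * S n)) N).
  { apply rsum_nonneg. intros; apply Rmult_le_pos. apply pow2_ge_0. apply pow_le; lra. }
  set (X := rsum (fun n => Cmod (d (S n)) ^ 2 * rho ^ (2 * S n)) N) in *.
  rewrite HA, HB in HAB.
  set (r2 := rho ^ 2) in *. 
  assert (Hr2 : 0 < r2 < 1) by (unfold r2; split; nra).
  assert (Hal2 : 0 < al ^ 2 <= 4/9) by nra.
  set (a2 := al ^ 2) in *.
  assert (HA18 : A' <= 18).
  { assert (r2 * K2 * a2 <= 8/9).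
    { apply Rle_trans with (1 * 2 * (4/9)). apply Rmult_le_compat; try nra. lra. }
    assert (r2 * K2 * beta ^ 2 <= 2).
    { apply Rle_trans with (1 * 2 * 1). apply Rmult_le_compat; try nra. lra. }
    nra. }
  assert (H1 : X * (1 - a2 * r2) <= A' * (1 - a2 * r2)) by (apply Rmult_le_compat_r; nra).
  assert (H2 : A' * (1 - a2 * r2) <= r2 * beta ^ 2 + r2 * (K2 - 1) * (beta ^ 2 + a2 * A')).
  { replace (r2 * beta ^ 2 + r2 * (K2 - 1) * (beta ^ 2 + a2 * A')) with (r2 * K2 * (beta ^ 2 + a2 * A') - r2 * a2 * A') by ring.
    nra. }
  assert (H3 : r2 * (K2 - 1) * (beta ^ 2 + a2 * A') <= (K2 - 1) * 19).
  { assert (0 <= K2 - 1) by lra. assert (beta ^ 2 + a2 * A' <= 19) by nra.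
    assert (0 <= beta ^ 2 + a2 * A') by nra.
    apply Rle_trans with (1 * (K2 - 1) * 19). apply Rmult_le_compat; nra. lra. }
  assert (H4 : (K2 - 1) * 19 <= 57 / m0 ^ 2 * eps).
  { unfold K2. replace ((1 + 3 * ep / m0 ^ 2 - 1) * 19) with (57 / m0 ^ 2 * ep) by (field; lra).
    apply Rmult_le_compat_l. apply Rlt_le, Rdiv_lt_0_compat; nra. lra. }
  replace (1 - a2 * r2) with (1 - al ^ 2 * rho ^ 2) in * by reflexivity. lra.
Qed.

Lemma main_bound b a : in_class_B b -> b 1%nat = Defs.RtoC a -> 0 < a < 1 ->
  forall t, 0 < t < 1 / sqrt 3 -> forall N,
  rsum (fun n => Cmod (cc b (S n)) ^ 2 * t ^ (2 * S n)) N * (1 - 4 * a ^ 2 * t ^ 2 / 3)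
  <= 27 / 4 * t ^ 2 * ((9 - 4 * a ^ 2) / 9) ^ 2.
Proof.
  intros Hb Hb1 Ha t Ht N.
  destruct (Pbound b Hb) as [B [HB0 HB]].
  pose proof sqrt3_bounds as Hs3.
  assert (Hs : sqrt 3 * sqrt 3 = 3) by (apply sqrt_sqrt; lra).
  set (s := / sqrt 3).
  assert (Hs0 : 0 < s) by (apply Rinv_0_lt_compat; lra).
  set (d := fun n => (RtoC (2/3 * s ^ n) * cc b n)%C).
  assert (Hd : forall L z, evalp d L z = (RtoC (2/3) * evalp (cc b) L (RtoC s * z))%C).
  { intros L z. rewrite evalp_scale, evalp_scal. unfold evalp. apply csum_ext. intros k _.
    unfold d. rewrite RtoC_mult. ring. }
  assert (H := core d (2 * a / 3) (fun L => 2 * B * (2/3) ^ L)).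
  assert (Hcore : rsum (fun n => Cmod (d (S n)) ^ 2 * (sqrt 3 * t) ^ (2 * S n)) N * (1 - (2 * a / 3) ^ 2 * (sqrt 3 * t) ^ 2)
        <= (sqrt 3 * t) ^ 2 * (1 - (2 * a / 3) ^ 2) ^ 2).
  { apply H.
    - lra.
    - unfold d. change (s ^ 0) with 1. unfold cc. rewrite Hb1. apply injective_projections; simpl; lra.
    - intros L z Hz. rewrite Hd, Cmod_mult, Cmod_R, Rabs_pos_eq by lra.
      assert (Cmod (RtoC s * z) <= 1 / sqrt 3).
      { rewrite Cmod_mult, Cmod_R, Rabs_pos_eq by lra. unfold s. pose proof (Cmod_ge_0 z).
        apply Rle_trans with (/ sqrt 3 * 1). apply Rmult_le_compat_l; lra. lra. }
      specialize (HB L _ H0). lra.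
    - intros eps Heps. destruct (pow_lt_1_zero (2/3) ltac:(rewrite Rabs_pos_eq; lra) (eps / (2 * B + 1)))
        as [L0 HL0]. apply Rdiv_lt_0_compat; lra. exists L0. intros L HL. specialize (HL0 L HL).
      rewrite Rabs_pos_eq in HL0 by (apply pow_le; lra).
      assert ((2 * B + 1) * (2/3) ^ L <= eps).
      { apply Rmult_le_reg_r with (/ (2 * B + 1)). apply Rinv_0_lt_compat; lra.
        replace ((2 * B + 1) * (2 / 3) ^ L * / (2 * B + 1)) with ((2/3) ^ L) by (field; lra). lra. }
      assert (0 <= (2/3) ^ L) by (apply pow_le; lra). nra.
    - intros L. apply Rmult_le_pos. lra. apply pow_le; lra.
    - split. apply Rmult_lt_0_compat; lra. apply Rmult_lt_reg_r with (/ sqrt 3). 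
      apply Rinv_0_lt_compat; lra. rewrite Rmult_comm, <- Rmult_assoc, Rinv_l, Rmult_1_l by lra.
      lra. }
  assert (Hsum : rsum (fun n => Cmod (d (S n)) ^ 2 * (sqrt 3 * t) ^ (2 * S n)) N =
     4 / 9 * rsum (fun n => Cmod (cc b (S n)) ^ 2 * t ^ (2 * S n)) N).
  { rewrite rsum_scal. apply rsum_ext. intros k _. unfold d. rewrite Cmod_mult, Cmod_R, Rabs_pos_eq.
    2:{ apply Rmult_le_pos. lra. apply pow_le; lra. }
    rewrite !pow_mult, !Rpow_mult_distr. 
    assert (Hss : (s ^ 2) ^ S k * (sqrt 3 ^ 2) ^ S k = 1).
    { rewrite <- Rpow_mult_distr. replace (s ^ 2 * sqrt 3 ^ 2) with 1. apply pow1.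
      unfold s. simpl. field. lra. }
    replace ((s ^ S k) ^ 2) with ((s ^ 2) ^ S k) by (rewrite <- !pow_mult; f_equal; lia).
    replace ((2 / 3) ^ 2 * (s ^ 2) ^ S k * Cmod (cc b (S k)) ^ 2 * ((sqrt 3 ^ 2) ^ S k * (t ^ 2) ^ S k))
      with ((2 / 3) ^ 2 * ((s ^ 2) ^ S k * (sqrt 3 ^ 2) ^ S k) * Cmod (cc b (S k)) ^ 2 * (t ^ 2) ^ S k) by ring.
    rewrite Hss. field. }
  rewrite Hsum in Hcore.
  replace ((2 * a / 3) ^ 2 * (sqrt 3 * t) ^ 2) with (4 * a ^ 2 * t ^ 2 / 3) in Hcore.
  2:{ rewrite Rpow_mult_distr, pow2_sqrt by lra. field. }
  replace ((sqrt 3 * t) ^ 2) with (3 * t ^ 2) in Hcore by (rewrite Rpow_mult_distr, pow2_sqrt by lra; reflexivity).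
  replace (1 - (2 * a / 3) ^ 2) with ((9 - 4 * a ^ 2) / 9) in Hcore by field.
  set (X := rsum (fun n => Cmod (cc b (S n)) ^ 2 * t ^ (2 * S n)) N) in *.
  replace (27 / 4 * t ^ 2 * ((9 - 4 * a ^ 2) / 9) ^ 2) with (9/4 * (3 * t ^ 2 * ((9 - 4 * a ^ 2) / 9) ^ 2)) by field.
  lra.
Qed.

Lemma G_deriv K0 a t : 1 - 4 * a ^ 2 * t ^ 2 / 3 > 0 ->
  derivable_pt_lim (fun t => K0 * (- ln (1 - 4 * a ^ 2 * t ^ 2 / 3) - 4 * a ^ 2 * t ^ 2 / 3)) t
   (K0 * (2 * (4 * a ^ 2 / 3) * t / (1 - 4 * a ^ 2 * t ^ 2 / 3) - 2 * (4 * a ^ 2 / 3) * t)).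
Proof. intros H. apply is_derive_Reals. auto_derive. lra. field. lra. Qed.

Lemma deriv_sum (c : nat -> R) (m : nat -> nat) N x :
  derivable_pt_lim (fun t => sum_f_R0 (fun k => c k * t ^ m k) N) x
    (sum_f_R0 (fun k => c k * (INR (m k) * x ^ pred (m k))) N).
Proof. induction N; simpl.
  apply (derivable_pt_lim_scal (fun t => t ^ m 0%nat)). apply derivable_pt_lim_pow.
  apply (derivable_pt_lim_plus (fun t => sum_f_R0 (fun k => c k * t ^ m k) N) (fun t => c (S N) * t ^ m (S N))).
  auto. apply (derivable_pt_lim_scal (fun t => t ^ m (S N))). apply derivable_pt_lim_pow. Qed.

Theorem corollary1 (b : nat -> Cx) (a r : R) :
  in_class_B b ->
  b 1%nat = RtoC a ->
  0 < a < 1 ->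
  0 < r <= 1 / sqrt 3 ->
  forall N : nat,
    sum_f_R0 (fun k => INR (k + 2) * Cnorm (b (k + 2)%nat) ^ 2 * r ^ (2 * (k + 2))) N
    <= 3 * (9 - 4 * a ^ 2) ^ 2 / (64 * a ^ 4)
       * (- ln (1 - 4 * a ^ 2 * r ^ 2 / 3) - 4 * a ^ 2 * r ^ 2 / 3).
Proof.
  intros Hb Hb1 Ha Hr N.
  set (K0 := 3 * (9 - 4 * a ^ 2) ^ 2 / (64 * a ^ 4)).
  set (cf := fun k => INR (k + 2) * Cnorm (b (k + 2)%nat) ^ 2).
  set (me := fun k => (2 * (k + 2))%nat).
  set (G := fun t => K0 * (- ln (1 - 4 * a ^ 2 * t ^ 2 / 3) - 4 * a ^ 2 * t ^ 2 / 3)).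
  set (F := fun t => sum_f_R0 (fun k => cf k * t ^ me k) N).
  set (G' := fun t => K0 * (2 * (4 * a ^ 2 / 3) * t / (1 - 4 * a ^ 2 * t ^ 2 / 3) - 2 * (4 * a ^ 2 / 3) * t)).
  set (F' := fun x => sum_f_R0 (fun k => cf k * (INR (me k) * x ^ pred (me k))) N).
  pose proof sqrt3_bounds as Hs3.
  assert (Hr2 : r ^ 2 <= 1 / 3).
  { assert (r ^ 2 <= (1 / sqrt 3) ^ 2) by (apply pow_incr; lra).
    replace ((1 / sqrt 3) ^ 2) with (1 / (sqrt 3 ^ 2)) in H by (field; lra).
    rewrite pow2_sqrt in H; lra. }
  assert (Hpos : forall t, 0 <= t <= r -> 1 - 4 * a ^ 2 * t ^ 2 / 3 > 0).
  { intros t Ht. assert (t ^ 2 <= r ^ 2) by (apply pow_incr; lra). 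
    assert (a ^ 2 < 1) by nra. assert (0 <= t ^ 2) by nra. nra. }
  destruct (MVT_cor2 (fun t => G t - F t) (fun t => G' t - F' t) 0 r) as [xi [Hmvt Hxi]]. lra.
  { intros t Ht. apply derivable_pt_lim_minus. apply G_deriv. apply Hpos; lra. apply deriv_sum. }
  assert (HG0 : G 0 = 0). { unfold G. replace (1 - 4 * a ^ 2 * 0 ^ 2 / 3) with 1 by (rewrite pow_i by lia; field). rewrite ln_1. rewrite pow_i by lia. field. }
  assert (HF0 : F 0 = 0).
  { unfold F. rewrite (sum_eq _ (fun _ => 0)). rewrite sum_cte. ring. intros k _. unfold me.
    replace (2 * (k + 2))%nat with (S (2 * k + 3)) by lia. simpl. ring. }
  assert (Hder : 0 <= G' xi - F' xi).
  { assert (Hxi2 : 0 < xi < 1 / sqrt 3) by lra.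
    pose proof (main_bound b a Hb Hb1 Ha xi Hxi2 (S N)) as HM.
    rewrite rsum_f_R0 in HM.
    assert (HF' : F' xi = 2 * xi * sum_f_R0 (fun n => Cmod (cc b (S n)) ^ 2 * xi ^ (2 * S n)) N).
    { unfold F'. rewrite scal_sum. apply sum_eq. intros k _. unfold cf, me, cc.
      rewrite Cmod_mult, Cmod_R, Rabs_pos_eq by apply pos_INR.
      replace (k + 2)%nat with (S (S k)) by lia. change (Cnorm (b (S (S k)))) with (Cmod (b (S (S k)))).
      replace (pred (2 * S (S k))) with (S (2 * S k)) by lia. rewrite mult_INR, <- (tech_pow_Rmult xi). set (w := xi ^ (2 * S k)). simpl (INR 2). ring. }
    rewrite HF'. set (Sc := sum_f_R0 (fun n => Cmod (cc b (S n)) ^ 2 * xi ^ (2 * S n)) N) in *.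
    set (cq := 4 * a ^ 2 / 3).
    assert (Hq : 1 - cq * xi ^ 2 > 0). { unfold cq. replace (4 * a ^ 2 / 3 * xi ^ 2) with (4 * a ^ 2 * xi ^ 2 / 3) by field. apply Hpos; lra. }
    assert (HG' : G' xi = 2 * xi * (K0 * cq ^ 2 * xi ^ 2 / (1 - cq * xi ^ 2))).
    { unfold G'. fold cq. replace (4 * a ^ 2 * xi ^ 2 / 3) with (cq * xi ^ 2) by (unfold cq; field). field. lra. }
    rewrite HG'.
    assert (HK : K0 * cq ^ 2 = 27 / 4 * ((9 - 4 * a ^ 2) / 9) ^ 2). { unfold K0, cq. field. lra. }
    replace (4 * a ^ 2 * xi ^ 2 / 3) with (cq * xi ^ 2) in HM by (unfold cq; field).
    assert (Sc <= K0 * cq ^ 2 * xi ^ 2 / (1 - cq * xi ^ 2)).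
    { apply Rmult_le_reg_r with (1 - cq * xi ^ 2). lra. unfold Rdiv. rewrite Rmult_assoc, Rinv_l by lra.
      rewrite HK. lra. }
    assert (0 <= 2 * xi) by lra. nra. }
  assert (0 <= G r - F r) by (rewrite HG0, HF0 in Hmvt; nra).
  unfold G, F, cf, me in H. fold K0. lra.
Qed.
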